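(* Let $G,H,K$ be graphs. (1) $G\mid(G\otimes H)$ and $H\mid(G\otimes H)$. (2) If $G\mid H$ and $H\mid K$, then $G\mid K$. (3) If $G\mid H$ and $H\mid G$, then $G$ and $H$ are isomorphic.
   Context: A weight function on finite $U$ is $\alpha:U\times U\to\mathbb{R}$, $\alpha\ge0$, symmetric, summing to $1$; degree $p(u)=\sum_{u'}\alpha(u,u')$; a graph is $(U,\alpha)$. For $G=(U,\alpha)$, $H=(V,\beta)$, the tensor product is $G\otimes H=(U\times V,\alpha\otimes\beta)$ with $(\alpha\otimes\beta)((u,v),(u',v'))=\alpha(u,u')\beta(v,v')$. For graphs $G=(U,\alpha)$, $H=(V,\beta)$ with degrees $p,q$, $H\mid G$ ($H$ is a factor of $G$) means there is a surjective $\phi:U\to V$ with (i) $q(v)=\sum_{u\in\phi^{-1}(v)}p(u)$ for all $v$, and (ii) $q(v)\sum_{u'\in\phi^{-1}(v')}\alpha(u,u')=p(u)\beta(v,v')$ for all $v,v'\in V$, $u\in\phi^{-1}(v)$. $G$ and $H$ are isomorphic if there is a bijection $f:U\to V$ with $\alpha(u,u')=\beta(f(u),f(u'))$ for all $u,u'$. *)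

(* Defs.v *)
From HB Require Import structures.
From mathcomp Require Import all_boot all_order all_algebra.
From mathcomp Require Import reals.
Set Implicit Arguments. Unset Strict Implicit. Unset Printing Implicit Defensive.
Import Order.TTheory GRing.Theory Num.Theory.
Local Open Scope ring_scope.

Section Graphs.
Variable R : realType.

Definition is_weight (U : finType) (alpha : U -> U -> R) : Prop :=
  (forall u u', 0 <= alpha u u') /\
  (forall u u', alpha u u' = alpha u' u) /\
  \sum_(u : U) \sum_(u' : U) alpha u u' = 1.

Definition deg (U : finType) (alpha : U -> U -> R) (u : U) : R :=
  \sum_(u' : U) alpha u u'.

Definition tensor (U V : finType) (alpha : U -> U -> R) (beta : V -> V -> R)
  (x y : (U * V)%type) : R := alpha x.1 y.1 * beta x.2 y.2.

(* is_factor beta alpha : the graph (V,beta) is a factor of (U,alpha), i.e. H | G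
   with H = (V,beta), G = (U,alpha), q = deg beta, p = deg alpha. *)
Definition is_factor (V U : finType) (beta : V -> V -> R) (alpha : U -> U -> R)
  : Prop :=
  exists phi : U -> V,
    (forall v, exists u, phi u = v) /\
    (forall v, deg beta v = \sum_(u | phi u == v) deg alpha u) /\
    (forall v v' u, phi u = v ->
       deg beta v * (\sum_(u' | phi u' == v') alpha u u') = deg alpha u * beta v v').

Definition isomorphic (U V : finType) (alpha : U -> U -> R) (beta : V -> V -> R)
  : Prop :=
  exists f : U -> V, bijective f /\ forall u u', alpha u u' = beta (f u) (f u').

End Graphs.

(* Main.v *)
Require Import Defs.
From HB Require Import structures.
From mathcomp Require Import all_boot all_order all_algebra.
From mathcomp Require Import reals ring.
Import Order.TTheory GRing.Theory Num.Theory.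
Local Open Scope ring_scope.

Module Helpers.
Set Implicit Arguments. Unset Strict Implicit.
Section H.
Variable R : realType.

Lemma sum_fst (U V : finType) (F : U * V -> R) u :
  \sum_(x | x.1 == u) F x = \sum_j F (u, j).
Proof.
rewrite big_mkcond.
have -> : \sum_(x : U*V) (if x.1 == u then F x else 0) =
  \sum_i \sum_j (if i == u then F (i,j) else 0).
  by rewrite pair_bigA; apply: eq_bigr => -[].
rewrite (bigD1 u) //= [X in _ + X]big1 ?addr0.
  by apply: eq_bigr => j _; rewrite eqxx.
by move=> i /negbTE ne; apply: big1 => j _; rewrite /= ne.
Qed.

Lemma sum_snd (U V : finType) (F : U * V -> R) v :
  \sum_(x | x.2 == v) F x = \sum_i F (i, v).
Proof.
rewrite big_mkcond.
have -> : \sum_(x : U*V) (if x.2 == v then F x else 0) =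
  \sum_i \sum_j (if j == v then F (i,j) else 0).
  by rewrite pair_bigA; apply: eq_bigr => -[].
rewrite exchange_big (bigD1 v) //= [X in _ + X]big1 ?addr0.
  by apply: eq_bigr => j _; rewrite eqxx.
by move=> i /negbTE ne; apply: big1 => j _; rewrite /= ne.
Qed.

Lemma deg_tensor (U V : finType) (a : U -> U -> R) (b : V -> V -> R) x :
  deg (tensor a b) x = deg a x.1 * deg b x.2.
Proof.
rewrite /deg /tensor.
have -> : \sum_(y : U*V) a x.1 y.1 * b x.2 y.2 = \sum_i \sum_j a x.1 i * b x.2 j.
  by rewrite pair_bigA.
rewrite mulr_suml; apply: eq_bigr => i _.
by rewrite mulr_sumr.
Qed.

Lemma weight_inhabited (V : finType) (b : V -> V -> R) :
  is_weight b -> exists v : V, True.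
Proof.
move=> [_ [_ b1]]; case: (pickP (@predT V)) => [v _|h]; first by exists v.
by move: b1; rewrite big_pred0 // => /eqP; rewrite eq_sym oner_eq0.
Qed.

Lemma deg0 (U : finType) (a : U -> U -> R) u u' :
  (forall x y, 0 <= a x y) -> deg a u = 0 -> a u u' = 0.
Proof. by move=> a0 /psumr_eq0P h; apply: h => // i _; apply: a0. Qed.

End H.
End Helpers.
Import Helpers.
Lemma fac_fst (R : realType) (U V : finType) (a : U -> U -> R) (b : V -> V -> R) :
  is_weight b -> is_factor a (tensor a b).
Proof.
move=> hb; have [v0 _] := weight_inhabited hb.
have b1 : \sum_v deg b v = 1 by case: hb => _ [].
exists (fun x => x.1); split; [|split].
- by move=> u; exists (u, v0).
- move=> u; rewrite sum_fst.
  under eq_bigr do rewrite deg_tensor /=.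
  by rewrite -mulr_sumr b1 mulr1.
- move=> u u' [x y] /= ->; rewrite sum_fst deg_tensor /= /tensor /=.
  rewrite -mulr_sumr -/(deg b y); ring.
Qed.

Lemma fac_snd (R : realType) (U V : finType) (a : U -> U -> R) (b : V -> V -> R) :
  is_weight a -> is_factor b (tensor a b).
Proof.
move=> ha; have [u0 _] := weight_inhabited ha.
have a1 : \sum_v deg a v = 1 by case: ha => _ [].
exists (fun x => x.2); split; [|split].
- by move=> v; exists (u0, v).
- move=> v; rewrite sum_snd.
  under eq_bigr do rewrite deg_tensor /=.
  by rewrite -mulr_suml a1 mul1r.
- move=> v v' [x y] /= ->; rewrite sum_snd deg_tensor /= /tensor /=.
  rewrite -mulr_suml -/(deg a x); ring.
Qed.
Lemma fac_trans (R : realType) (U V W : finType)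
  (alpha : U -> U -> R) (beta : V -> V -> R) (gamma : W -> W -> R) :
  is_weight gamma ->
  is_factor alpha beta -> is_factor beta gamma -> is_factor alpha gamma.
Proof.
move=> [c0 _] [phi [s1 [i1 e1]]] [psi [s2 [i2 e2]]].
have part : forall u (F : W -> R), \sum_(w | phi (psi w) == u) F w =
    \sum_(v | phi v == u) \sum_(w | psi w == v) F w.
  move=> u F; rewrite (partition_big psi (fun v => phi v == u)) //.
  apply: eq_bigr => v /eqP hv; apply: eq_bigl => w.
  by case: (eqVneq (psi w) v) => [->|]; rewrite ?hv ?eqxx ?andbF.
exists (fun w => phi (psi w)); split; [|split].
- move=> u; have [v hv] := s1 u; have [w hw] := s2 v.
  by exists w; rewrite hw.
- move=> u; rewrite i1 part; apply: eq_bigr => v _; exact: i2.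
- move=> u u' w hw; rewrite part.
  set v := psi w.
  have [q0|qn0] := eqVneq (deg beta v) 0.
    have r0 : deg gamma w = 0.
      move: q0; rewrite i2 => /psumr_eq0P h; apply: h; last by rewrite eqxx.
      by move=> i _; apply: sumr_ge0 => j _; apply: c0.
    rewrite r0 mul0r big1 ?mulr0 // => v' _; apply: big1 => w' _.
    exact: deg0 r0.
  have HS : forall v', \sum_(w' | psi w' == v') gamma w w' =
      (deg gamma w / deg beta v) * beta v v'.
    move=> v'; apply: (mulfI qn0); rewrite e2 //.
    by rewrite mulrCA mulrA divfK.
  under eq_bigr do rewrite HS.
  rewrite -mulr_sumr mulrCA e1 // mulrA divfK //.
Qed.
Lemma surj_card (A B : finType) (f : A -> B) :
  (forall b, exists a, f a = b) -> (#|B| <= #|A|)%N.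
Proof.
move=> s; apply: leq_trans (leq_image_card f A).
apply: subset_leq_card; apply/subsetP => b _.
by have [a <-] := s b; apply: image_f.
Qed.
Arguments surj_card [A B f].

Lemma fac_iso (R : realType) (U V : finType)
  (alpha : U -> U -> R) (beta : V -> V -> R) :
  is_weight alpha -> is_weight beta ->
  is_factor alpha beta -> is_factor beta alpha -> isomorphic alpha beta.
Proof.
move=> [a0 _] [b0 _] [phi [s1 [i1 e1]]] [psi [s2 _]].
have cVU := surj_card s2.
have injphi : injective phi.
  have /image_injP h : #|image phi V| == #|V|.
    rewrite eqn_leq leq_image_card /=; apply: leq_trans cVU _.
    apply: subset_leq_card; apply/subsetP => u _.
    by have [v <-] := s1 u; apply: image_f.
  by move=> x y; apply: h.
have ex : forall u, exists v, phi v == u.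
  by move=> u; have [v hv] := s1 u; exists v; apply/eqP.
pose f u := xchoose (ex u).
have fK : cancel f phi by move=> u; apply/eqP; exact: (xchooseP (ex u)).
have Kf : cancel phi f by move=> v; apply: injphi; rewrite fK.
exists f; split; first by exists phi.
have degE : forall v, deg alpha (phi v) = deg beta v.
  move=> v; rewrite i1 (big_pred1 v) // => x /=.
  by rewrite (inj_eq injphi).
move=> u u'; have := e1 u u' (f u) (fK u).
rewrite (big_pred1 (f u')); last first.
  by move=> x /=; apply/eqP/eqP => [<-|->]; rewrite ?Kf ?fK.
rewrite -{1}(fK u) degE.
have [q0|qn0] := eqVneq (deg beta (f u)) 0.
  move=> _; rewrite (deg0 _ b0 q0); apply: (deg0 _ a0).
  by rewrite -{1}(fK u) degE.
by move=> /(mulfI qn0) ->.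
Qed.

Theorem proposition4p3 (R : realType) (U V W : finType)
  (alpha : U -> U -> R) (beta : V -> V -> R) (gamma : W -> W -> R) :
  is_weight alpha -> is_weight beta -> is_weight gamma ->
  (* (1) G | G (x) H and H | G (x) H *)
  (is_factor alpha (tensor alpha beta) /\ is_factor beta (tensor alpha beta)) /\
  (* (2) G | H -> H | K -> G | K *)
  (is_factor alpha beta -> is_factor beta gamma -> is_factor alpha gamma) /\
  (* (3) G | H -> H | G -> G and H isomorphic *)
  (is_factor alpha beta -> is_factor beta alpha -> isomorphic alpha beta).
Proof.
move=> ha hb hc; split; [split|split].
- exact: fac_fst.
- exact: fac_snd.
- exact: fac_trans.
- exact: fac_iso.
Qed.
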